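(* Let $K\subset\mathbb{R}^n$ be a convex body with smooth boundary and let $\gamma:S^1\to\mathbb{R}^n$ be a piecewise linear closed curve. If there exists $\mathcal{N}\subset\mathbb{R}^n\setminus\{0\}$ such that $0\in\mathrm{conv}(\mathcal{N})$ and $h(K:\nu)\le h(\gamma(S^1):\nu)$ for every $\nu\in\mathcal{N}$, then $\gamma\in\mathcal{P}^+(K)$.
   Context: A convex body is a compact convex set with nonempty interior; $S^1=\mathbb{R}/\mathbb{Z}$. For compact $S\subset\mathbb{R}^n$ and $\nu\in\mathbb{R}^n$, $h(S:\nu)=\max\{s\cdot\nu:s\in S\}$. $\mathcal{P}^+(K)$ is the set of piecewise linear closed curves $\gamma:S^1\to\mathbb{R}^n$ such that $\gamma(S^1)+x\not\subset\mathrm{int}\,K$ for every $x\in\mathbb{R}^n$. $\mathrm{conv}$ denotes convex hull. *)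

(* Defs.v *)
From HB Require Import structures.
From mathcomp Require Import all_boot all_order all_algebra.
From mathcomp Require Import all_classical all_reals all_analysis.
Set Implicit Arguments. Unset Strict Implicit. Unset Printing Implicit Defensive.
Import Order.TTheory GRing.Theory Num.Theory.
Import numFieldNormedType.Exports.
Local Open Scope classical_set_scope.
Local Open Scope ring_scope.

Section Defs.
Variables (R : realType) (n : nat).
Local Notation V := 'rV[R]_n.

Definition dotv (x y : V) : R := \sum_(i < n) x ord0 i * y ord0 i.

(* h(S : nu) = max { s . nu : s in S } (the max, when it exists, is the sup) *)
Definition supp_fun (S : set V) (nu : V) : R := sup [set dotv s nu | s in S].

Definition convex_setv (K : set V) : Prop :=
  forall x y t, K x -> K y -> 0 <= t -> t <= 1 -> K ((1 - t) *: x + t *: y).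

Definition convex_body (K : set V) : Prop :=
  [/\ compact K, convex_setv K & interior K !=set0].

Fixpoint iter_dirderiv (vs : seq V) (f : V -> R) : V -> R :=
  match vs with
  | [::] => f
  | v :: vs' => fun x => 'D_v (iter_dirderiv vs' f) x
  end.

Definition smooth_fun (f : V -> R) : Prop :=
  forall vs : seq V,
    continuous (iter_dirderiv vs f) /\
    (forall x v, derivable (iter_dirderiv vs f) x v).

Definition smooth_boundary (K : set V) : Prop :=
  forall p, K p -> ~ interior K p ->
    exists f : V -> R, [/\ smooth_fun f, f p = 0,
      (exists v : V, 'D_v f p != 0) &
      exists2 e : R, 0 < e & forall y, ball p e y -> (K y <-> f y <= 0)].

Definition conv_hull (N : set V) : set V :=
  [set x | exists m (c : 'I_m -> R) (p : 'I_m -> V),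
     [/\ forall i, 0 <= c i, \sum_(i < m) c i = 1, forall i, N (p i)
       & x = \sum_(i < m) c i *: p i]].

(* S^1 = R/Z: a closed curve is a 1-periodic map R -> R^n; gamma(S^1) = range gamma.
   Piecewise linear: a partition 0 = t_0 < ... < t_m = 1 with gamma affine on each
   [t_i, t_{i+1}] (continuity then follows). *)
Definition pl_closed_curve (g : R -> V) : Prop :=
  (forall t, g (t + 1) = g t) /\
  exists (m : nat) (ts : nat -> R),
    [/\ ts 0%N = 0, ts m = 1, (forall i, (i < m)%N -> ts i < ts i.+1) &
      forall i, (i < m)%N -> exists u w : V,
        forall t, ts i <= t -> t <= ts i.+1 -> g t = u + t *: w].

Definition Pplus (K : set V) (g : R -> V) : Prop :=
  pl_closed_curve g /\
  forall x : V, ~ ([set y + x | y in range g] `<=` interior K).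

End Defs.

(* Main.v *)
Require Import Defs.
From HB Require Import structures.
From mathcomp Require Import all_boot all_order all_algebra.
From mathcomp Require Import all_classical all_reals all_analysis.
From mathcomp Require Import ring lra.
Import Order.TTheory GRing.Theory Num.Theory.
Import numFieldNormedType.Exports.
Local Open Scope classical_set_scope.
Local Open Scope ring_scope.

Lemma dotvDl {R : realType} {n : nat} (x y z : 'rV[R]_n) :
  dotv (x + y) z = dotv x z + dotv y z.
Proof. by rewrite /dotv -big_split; apply: eq_bigr => i _; rewrite mxE mulrDl. Qed.

Lemma dotvZl {R : realType} {n : nat} (a : R) (x z : 'rV[R]_n) :
  dotv (a *: x) z = a * dotv x z.
Proof. by rewrite /dotv mulr_sumr; apply: eq_bigr => i _; rewrite mxE mulrA. Qed.

Lemma dotv0r {R : realType} {n : nat} (x : 'rV[R]_n) : dotv x 0 = 0.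
Proof. by rewrite /dotv big1 // => i _; rewrite mxE mulr0. Qed.

Lemma dotv_sumr {R : realType} {n m : nat} (x : 'rV[R]_n) (c : 'I_m -> R)
  (p : 'I_m -> 'rV[R]_n) :
  dotv x (\sum_(i < m) c i *: p i) = \sum_(i < m) c i * dotv x (p i).
Proof.
rewrite /dotv.
under eq_bigr => k _ do rewrite summxE mulr_sumr.
rewrite exchange_big; apply: eq_bigr => i _; rewrite mulr_sumr.
by apply: eq_bigr => k _; rewrite mxE mulrCA.
Qed.

Lemma dotv_self_gt0 {R : realType} {n : nat} (v : 'rV[R]_n) :
  v != 0 -> 0 < dotv v v.
Proof.
move=> v0.
have [k vk] : exists k, v ord0 k != 0.
  apply/not_existsP => /= H; move/eqP: v0; apply; apply/matrixP => i j.
  rewrite (ord1 i) mxE; apply/eqP; apply/negPn/negP => Hn; exact: (H j).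
rewrite /dotv (bigD1 k) //=.
apply: ltr_pwDl; first by rewrite -expr2 lt_def sqr_ge0 sqrf_eq0 vk.
by apply: sumr_ge0 => i _; rewrite -expr2 sqr_ge0.
Qed.

Lemma coord_le_norm {R : realType} {n : nat} (s : 'rV[R]_n) k :
  `|s ord0 k| <= `|s|.
Proof.
have -> : `|s| = mx_norm s by [].
rewrite mx_normrE.
exact: (le_bigmax 0 (fun ij : 'I_1 * 'I_n => `|s ij.1 ij.2|) (ord0, k)).
Qed.

Lemma dotv_bound {R : realType} {n : nat} (s v : 'rV[R]_n) M :
  `|s| <= M -> dotv s v <= M * \sum_(k < n) `|v ord0 k|.
Proof.
move=> sM; rewrite /dotv mulr_sumr; apply: ler_sum => k _.
apply: (@le_trans _ _ `|s ord0 k * v ord0 k|); first exact: ler_norm.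
rewrite normrM.
apply: ler_wpM2r => //; exact: le_trans (coord_le_norm s k) sM.
Qed.

Lemma K_strict {R : realType} {n : nat} {K : set 'rV[R]_n} {y v} :
  compact K -> interior K y -> v != 0 -> dotv y v < supp_fun K v.
Proof.
move=> cK iK v0.
have hub : has_ubound [set dotv s v | s in K].
  have := compact_bounded cK => -[M0 [_ HM]].
  exists ((M0 + 1) * \sum_(k < n) `|v ord0 k|) => _ [s Ks <-].
  apply: dotv_bound; apply: HM => //; lra.
move: iK; rewrite /interior /= => /nbhs_ballP [e /= e0 He].
have nv : 0 < `|v| by rewrite normr_gt0.
set eps := e / (2 * `|v|).
have eps0 : 0 < eps by rewrite /eps divr_gt0 // mulr_gt0.
have Kz : K (y + eps *: v).
  apply: He; rewrite -ball_normE /ball_ /= opprD addrA subrr add0r normrN.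
  rewrite normrZ gtr0_norm // /eps -mulrA mulrC -mulrA.
  rewrite (_ : _ * _ = e / 2); first lra.
  by field; rewrite gt_eqF.
apply: (@lt_le_trans _ _ (dotv (y + eps *: v) v)).
  rewrite dotvDl dotvZl ltrDl; apply: mulr_gt0 => //; exact: dotv_self_gt0.
by apply: ub_le_sup => //; exists (y + eps *: v).
Qed.

Lemma period_nat {R : realType} {n : nat} {g : R -> 'rV[R]_n} :
  (forall t, g (t + 1) = g t) -> forall y (k : nat), g (y + k%:R) = g y.
Proof.
move=> gp y; elim=> [|k IH]; first by rewrite addr0.
by rewrite -natr1 addrA gp.
Qed.

Lemma period_int {R : realType} {n : nat} {g : R -> 'rV[R]_n} :
  (forall t, g (t + 1) = g t) -> forall y (z : int), g (y + z%:~R) = g y.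
Proof.
move=> gp y [k|k].
  by rewrite -pmulrn (period_nat gp).
rewrite NegzE mulrNz.
rewrite -{2}(subrK (k.+1%:~R) y) -pmulrn (period_nat gp).
by [].
Qed.

Lemma find_piece {R : realType} (m : nat) (ts : nat -> R) y :
  ts 0%N <= y -> forall j, (j < m)%N -> y <= ts j.+1 ->
  exists i, (i < m)%N /\ ts i <= y <= ts i.+1.
Proof.
move=> y0; elim=> [|j IH] jm yj; first by exists 0%N; rewrite y0 yj.
case: (lerP y (ts j.+1)) => h.
  apply: IH => //; exact: ltnW.
by exists j.+1; rewrite jm (ltW h) yj.
Qed.

Lemma attain_nat {R : realType} (f : nat -> R) m :
  exists j, (j <= m)%N /\ forall i, (i <= m)%N -> f i <= f j.
Proof.
elim: m => [|m [j [jm Hj]]].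
  by exists 0%N; split => // i; rewrite leqn0 => /eqP ->.
case: (lerP (f m.+1) (f j)) => h.
  exists j; split; first exact: leqW.
  move=> i; rewrite leq_eqVlt => /orP [/eqP -> //| ]; rewrite ltnS; exact: Hj.
exists m.+1; split => // i; rewrite leq_eqVlt => /orP [/eqP -> //| ].
rewrite ltnS => /Hj hi; exact: le_trans hi (ltW h).
Qed.

Lemma curve_attain {R : realType} {n : nat} {g : R -> 'rV[R]_n} v :
  pl_closed_curve g ->
  exists s, range g s /\ forall t, dotv (g t) v <= dotv s v.
Proof.
move=> [gp [m [ts [t0 tm tinc tpc]]]].
have [j [jm Hj]] := attain_nat (fun i => dotv (g (ts i)) v) m.
exists (g (ts j)); split; first by exists (ts j).
move=> t.
set z := Num.floor t.
have /andP [zl zu] := floor_itv t.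
set y := t - z%:~R.
have -> : g t = g y by rewrite -(period_int gp y z) /y subrK.
have y0 : ts 0%N <= y by rewrite t0 /y subr_ge0.
have m0 : (0 < m)%N.
  case: m tm {jm Hj tpc tinc} => // H; rewrite t0 in H.
  by move: (@ltr01 R); rewrite H ltxx.
have y1 : y <= ts (m.-1).+1.
  rewrite prednK // tm /y lerBlDl -[X in X <= _]addr0.
  rewrite intrD in zu; lra.
have [i [im /andP [yl yu]]] := @find_piece _ m ts y y0 m.-1 ltac:(by rewrite ltn_predL) y1.
have [u [w Hp]] := tpc i im.
have eq (s : R) : ts i <= s -> s <= ts i.+1 ->
    dotv (g s) v = dotv u v + s * dotv w v.
  by move=> h1 h2; rewrite Hp // dotvDl dotvZl.
rewrite eq //.
case: (lerP 0 (dotv w v)) => hw.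
  apply: (@le_trans _ _ (dotv (g (ts i.+1)) v)); last exact: Hj.
  rewrite eq //; last exact: ltW (tinc i im).
  by rewrite lerD2l ler_wpM2r.
apply: (@le_trans _ _ (dotv (g (ts i)) v)); last by apply: Hj; exact: ltnW.
rewrite eq //; last exact: ltW (tinc i im).
by rewrite lerD2l ler_wnM2r // ltW.
Qed.

Theorem lemma6p1 (R : realType) (n : nat) (K : set 'rV[R]_n) (g : R -> 'rV[R]_n)
  (N : set 'rV[R]_n) :
  convex_body K -> smooth_boundary K -> pl_closed_curve g ->
  N `<=` [set v | v != 0] -> conv_hull N 0 ->
  (forall nu, N nu -> supp_fun K nu <= supp_fun (range g) nu) ->
  Pplus K g.
Proof.
move=> [cK _ _] _ pg NN [m [c [p [c0 c1 Np e0]]]] hle.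
split => // x sub.
have neg : forall i, dotv x (p i) < 0.
  move=> i; have nu0 := NN _ (Np i); have := hle _ (Np i).
  have [s [[t _ <-] Hs]] := curve_attain (p i) pg.
  have -> : supp_fun (range g) (p i) = dotv (g t) (p i).
    apply/eqP; rewrite eq_le; apply/andP; split.
      by apply: ge_sup; [exists (dotv (g t) (p i)), (g t) => //; exists t
                        | move=> _ [_ [t' _ <-] <-]; exact: Hs].
    apply: ub_le_sup; last by exists (g t) => //; exists t.
    by exists (dotv (g t) (p i)) => _ [_ [t' _ <-] <-]; exact: Hs.
  have hin : [set y + x | y in range g] (g t + x) by exists (g t) => //; exists t.
  have := K_strict cK (sub _ hin) nu0; rewrite dotvDl => h1 h2.
  have := lt_le_trans h1 h2; lra.
have [k ck] : exists k, 0 < c k.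
  apply/not_existsP => H.
  have : \sum_(i < m) c i = 0.
    by apply: big1 => i _; apply/eqP; rewrite eq_le c0 andbT leNgt; apply/negP; exact: H.
  by rewrite c1 => /eqP; rewrite oner_eq0.
have : dotv x 0 < 0.
  rewrite e0 dotv_sumr (bigD1 k) //=.
  have : \sum_(i < m | i != k) c i * dotv x (p i) <= 0.
    apply: sumr_le0 => i _; apply: mulr_ge0_le0 => //; exact: ltW.
  have : c k * dotv x (p k) < 0 by rewrite pmulr_rlt0.
  lra.
by rewrite dotv0r ltxx.
Qed.
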